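(* For $f\in C_c^\infty(\mathbb R)$ define $\Psi_Nf:\frac1N\mathbb Z\to\mathbb R$ by $(\Psi_Nf)(i)=f(i)$ if $i\in\frac1N\mathbb Z\setminus A_N$ and $(\Psi_Nf)(i)=f(0)$ otherwise, where $A_N=\frac1N\{-R,\dots,R\}\setminus\{0\}$ for a fixed integer $R\ge1$. Then for every $f\in C_c^\infty(\mathbb R)$ the sequence $\Psi_Nf\in H_N^{\mathrm{sip}}$ converges strongly to $f\in H^{\mathrm{sbm}}$ with respect to the Hilbert space convergence $H_N^{\mathrm{sip}}\to H^{\mathrm{sbm}}$.
   Context: $\gamma>0$; $\mu_N$ gives mass $\frac1N$ to each point of $\frac1N\mathbb Z$; $\nu_{\gamma,N}=\mu_N+\sqrt2\gamma\delta_0$; $H_N^{\mathrm{sip}}=L^2(\frac1N\mathbb Z,\nu_{\gamma,N})$; $H^{\mathrm{sbm}}=L^2(\mathbb R,dx+\sqrt2\gamma\delta_0)$. Hilbert convergence is witnessed by $C=\{f+\lambda\mathbf 1_{\{0\}}:f\in C_c^\infty(\mathbb R),\lambda\in\mathbb R\}$ and $\Phi_Nf=f|_{\frac1N\mathbb Z}$. $f_N\in H_N^{\mathrm{sip}}$ converges strongly to $f\in H^{\mathrm{sbm}}$ if there exist $\tilde f_M\in C$ with $\|\tilde f_M-f\|_{H^{\mathrm{sbm}}}\to0$ and $\lim_{M\to\infty}\limsup_{N\to\infty}\|\Phi_N\tilde f_M-f_N\|_{H_N^{\mathrm{sip}}}=0$. *)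

(* Defs.v *)
From Stdlib Require Import Reals ZArith.
From Coquelicot Require Import Coquelicot.
Open Scope R_scope.

Definition smooth (f : R -> R) : Prop := forall (n : nat) (x : R), ex_derive_n f n x.

Definition Cc_inf (f : R -> R) : Prop :=
  smooth f /\ exists K : R, forall x : R, K < Rabs x -> f x = 0.

Definition core_fun (f : R -> R) (lam : R) : R -> R :=
  fun x => f x + (if Req_EM_T x 0 then lam else 0).

(* Squared norm in H^sbm = L^2(R, dx + sqrt2 gamma delta_0).  The Lebesgue part
   is written as the improper Riemann integral over R; it is only ever applied to
   functions of the form (element of C) - (element of C), i.e. compactly supported
   and continuous off 0, for which it agrees with the Lebesgue integral. *)
Definition sbm_norm2 (gamma : R) (g : R -> R) : R :=
  RInt_gen (fun x => (g x)^2) (Rbar_locally m_infty) (Rbar_locally p_infty)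
  + sqrt 2 * gamma * (g 0)^2.

Definition sbm_norm (gamma : R) (g : R -> R) : R := sqrt (sbm_norm2 gamma g).

(* Elements of H_N^sip are functions on (1/N)Z, indexed here by k : Z (point k/N).
   Sum over Z of squares (only applied to finitely supported functions). *)
Definition sumZ_sq (u : Z -> R) : R :=
  Series (fun k : nat => (u (Z.of_nat k))^2)
  + Series (fun k : nat => (u (- Z.of_nat (S k))%Z)^2).

(* Squared norm in L^2((1/N)Z, mu_N + sqrt2 gamma delta_0), N >= 1 *)
Definition sip_norm2 (gamma : R) (N : nat) (u : Z -> R) : R :=
  / INR N * sumZ_sq u + sqrt 2 * gamma * (u 0%Z)^2.

Definition sip_norm (gamma : R) (N : nat) (u : Z -> R) : R := sqrt (sip_norm2 gamma N u).

Definition Phi (N : nat) (g : R -> R) : Z -> R := fun k => g (IZR k / INR N).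

Definition Psi (r N : nat) (f : R -> R) : Z -> R :=
  fun k => if (Z.leb 1 (Z.abs k) && Z.leb (Z.abs k) (Z.of_nat r))%bool
           then f 0 else f (IZR k / INR N).

(* Strong convergence of f_N in H_N^sip (N = 1,2,...) to f in H^sbm, with f a
   function in C (here f in C_c^infty).  fN N is the element of H_{N+1}^sip. *)
Definition strong_conv (gamma : R) (fN : nat -> Z -> R) (f : R -> R) : Prop :=
  exists (h : nat -> R -> R) (lam : nat -> R),
    (forall M, Cc_inf (h M)) /\
    is_lim_seq (fun M => sbm_norm gamma (fun x => core_fun (h M) (lam M) x - f x)) 0 /\
    filterlim
      (fun M : nat => LimSup_seq
         (fun N : nat => sip_norm gamma (S N)
            (fun k => Phi (S N) (core_fun (h M) (lam M)) k - fN N k)))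
      eventually (Rbar_locally 0).

(* Main.v *)
Require Import Defs.
From Stdlib Require Import Reals ZArith Lia Lra FunctionalExtensionality.
From Coquelicot Require Import Coquelicot.
Open Scope R_scope.

Lemma series_fin (a : nat -> R) (m : nat) :
  (forall n, (m < n)%nat -> a n = 0) -> Series a = sum_n a m.
Proof.
  intros H. apply is_series_unique.
  assert (E : forall n, (m <= n)%nat -> sum_n a n = sum_n a m).
  { intros n Hn. induction n.
    - assert (n0 : m = 0%nat) by lia. subst; reflexivity.
    - destruct (Nat.eq_dec m (S n)) as [->|Hne]; [reflexivity|].
      rewrite sum_Sn, H by lia. change (sum_n a n + 0 = sum_n a m). rewrite Rplus_0_r. apply IHn. lia. }
  change (is_lim_seq (sum_n a) (sum_n a m)).
  apply is_lim_seq_ext_loc with (fun _ => sum_n a m).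
  - exists m. intros n Hn. symmetry. apply E. exact Hn.
  - apply is_lim_seq_const.
Qed.

Lemma sum_bound (a : nat -> R) (B : R) (n : nat) :
  (forall k, 0 <= a k <= B) -> 0 <= sum_n a n <= INR (S n) * B.
Proof.
  intros H. induction n.
  - rewrite sum_O. simpl. specialize (H 0%nat). lra.
  - rewrite sum_Sn. change (plus (sum_n a n) (a (S n))) with (sum_n a n + a (S n)).
    rewrite S_INR. specialize (H (S n)). nra.
Qed.

Lemma limC (C : R) : is_lim_seq (fun N => C / INR (S N)) 0.
Proof.
  assert (H1 : is_lim_seq (fun N => INR (S N)) p_infty).
  { apply (is_lim_seq_incr_1 INR p_infty). apply is_lim_seq_INR. }
  assert (H2 := is_lim_seq_inv _ _ H1 ltac:(discriminate)).
  simpl in H2.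
  assert (H3 := is_lim_seq_scal_l _ C _ H2). simpl in H3.
  rewrite Rmult_0_r in H3.
  eapply is_lim_seq_ext; [|exact H3]. intros n. reflexivity.
Qed.

Lemma lim_sqrt (u : nat -> R) : is_lim_seq u 0 -> is_lim_seq (fun n => sqrt (u n)) 0.
Proof.
  intros H. rewrite <- sqrt_0.
  apply (filterlim_comp _ _ _ u sqrt eventually (locally 0)).
  - exact H.
  - apply continuity_pt_filterlim. apply continuity_pt_sqrt. lra.
Qed.

Theorem proposition5p14 (gamma : R) (r : nat) (f : R -> R) :
  0 < gamma -> (1 <= r)%nat -> Cc_inf f ->
  strong_conv gamma (fun N => Psi r (S N) f) f.
Proof.
  intros Hg Hr Hf.
  assert (Hcont : forall x, continuity_pt f x).
  { intros x. apply continuity_pt_filterlim. apply (ex_derive_continuous (K:=R_AbsRing) (V:=R_NormedModule)).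
    destruct Hf as [Hs _]. exact (Hs 1%nat x). }
  destruct (continuity_ab_maj (fun x => (f x - f 0)^2) (- INR r) (INR r))
    as [Mx [HM _]].
  { assert (0 <= INR r) by apply pos_INR. lra. }
  { intros c _. assert (Hm : continuity_pt (fun x => f x - f 0) c).
    { apply continuity_pt_minus; [apply Hcont|apply continuity_pt_const; intros ? ?; reflexivity]. }
    change (continuity_pt (fun x => (f x - f 0) * ((f x - f 0) * 1)) c).
    apply continuity_pt_mult; [exact Hm|]. apply continuity_pt_mult; [exact Hm|].
    apply continuity_pt_const; intros ? ?; reflexivity. }
  set (B := (f Mx - f 0)^2) in *.
  exists (fun _ => f), (fun _ => 0). split; [intros; exact Hf|]. split.
  - apply is_lim_seq_ext with (fun _ => 0); [|apply is_lim_seq_const].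
    intros M. unfold sbm_norm, sbm_norm2.
    replace (fun x => (core_fun f 0 x - f x)^2) with (fun _ : R => 0).
    2:{ apply functional_extensionality; intros x. unfold core_fun.
        destruct (Req_EM_T x 0); ring. }
    unfold core_fun. destruct (Req_EM_T 0 0); [|congruence].
    replace (f 0 + 0 - f 0) with 0 by ring.
    rewrite (is_RInt_gen_unique (fun _ : R => 0) 0).
    + replace (0 + sqrt 2 * gamma * 0^2) with 0 by ring. symmetry; apply sqrt_0.
    + intros P HP. simpl.
      exists (fun _ => True) (fun _ => True).
      * exists 0. auto.
      * exists 0. auto.
      * intros a b _ _. exists 0. split.
        -- pose proof (is_RInt_const a b 0) as Hc.
           simpl. unfold scal in Hc; simpl in Hc; unfold mult in Hc; simpl in Hc.
           rewrite Rmult_0_r in Hc. exact Hc.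
        -- exact (locally_singleton _ _ HP).
  - set (d := fun N k => Phi (S N) (core_fun f 0) k - Psi r (S N) f k).
    assert (Hd : forall N k, (d N k)^2 =
      if (Z.leb 1 (Z.abs k) && Z.leb (Z.abs k) (Z.of_nat r))%bool
      then (f (IZR k / INR (S N)) - f 0)^2 else 0).
    { intros N k. unfold d, Phi, Psi, core_fun.
      destruct (Req_EM_T _ 0); destruct (_ && _)%bool; ring. }
    assert (HdB : forall N k, 0 <= (d N k)^2 <= B).
    { intros N k. rewrite Hd. destruct (Z.leb 1 (Z.abs k) && Z.leb (Z.abs k) (Z.of_nat r))%bool eqn:E.
      - apply andb_prop in E. destruct E as [_ E]. apply Z.leb_le in E.
        split; [apply pow2_ge_0|]. apply HM.
        assert (HS : 1 <= INR (S N)) by (apply (le_INR 1); lia).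
        assert (Hk : Rabs (IZR k) <= INR r).
        { rewrite <- abs_IZR, INR_IZR_INZ. apply IZR_le. exact E. }
        assert (Habs : Rabs (IZR k / INR (S N)) <= INR r).
        { unfold Rdiv. rewrite Rabs_mult, Rabs_inv, (Rabs_right (INR (S N))) by lra.
          apply Rle_trans with (Rabs (IZR k) * 1).
          - apply Rmult_le_compat_l; [apply Rabs_pos|].
            rewrite <- Rinv_1. apply Rinv_le_contravar; lra.
          - lra. }
        apply Rabs_le_between in Habs. lra.
      - split; [lra|]. unfold B. apply pow2_ge_0. }
    set (C := 2 * (INR (S r) * B)).
    assert (Hbound : forall N, 0 <= sip_norm gamma (S N) (d N) <= sqrt (C / INR (S N))).
    { intros N. split; [apply sqrt_pos|]. apply sqrt_le_1_alt.
      unfold sip_norm2, sumZ_sq.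
      rewrite (series_fin _ r), (series_fin _ r).
      2:{ intros n Hn. rewrite Hd.
          replace (Z.leb (Z.abs (- Z.of_nat (S n))) (Z.of_nat r)) with false.
          - rewrite Bool.andb_false_r. ring.
          - symmetry. apply Z.leb_gt. lia. }
      2:{ intros n Hn. rewrite Hd.
          replace (Z.leb (Z.abs (Z.of_nat n)) (Z.of_nat r)) with false.
          - rewrite Bool.andb_false_r. ring.
          - symmetry. apply Z.leb_gt. lia. }
      assert (H0 : (d N 0%Z)^2 = 0) by (rewrite Hd; reflexivity).
      rewrite H0.
      pose proof (sum_bound (fun k => (d N (Z.of_nat k))^2) B r ltac:(intros; apply HdB)).
      pose proof (sum_bound (fun k => (d N (- Z.of_nat (S k))%Z)^2) B r ltac:(intros; apply HdB)).
      assert (HS : 0 < INR (S N)) by (apply lt_0_INR; lia).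
      unfold C, Rdiv. rewrite Rmult_0_r, Rmult_comm, Rplus_0_r.
      apply Rmult_le_compat_r; [left; apply Rinv_0_lt_compat; exact HS|]. lra. }
    assert (Hlim : is_lim_seq (fun N => sip_norm gamma (S N) (d N)) 0).
    { apply is_lim_seq_le_le with (fun _ => 0) (fun N => sqrt (C / INR (S N))).
      - exact Hbound.
      - apply is_lim_seq_const.
      - apply lim_sqrt. apply limC. }
    assert (HLS : LimSup_seq (fun N => sip_norm gamma (S N) (d N)) = 0).
    { apply is_LimSup_seq_unique. apply is_lim_LimSup_seq. exact Hlim. }
    intros P HP. exists 0%nat. intros M _. unfold d in HLS. rewrite HLS.
    exact (locally_singleton _ _ HP).
Qed.
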